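(* Let $n,m$ be integers with either $m=n-1\geq 0$ or $m=n-2\geq 0$, and let $H(s)=Q_{nm}(s)/P_{nm}(s)$ be the $(n,m)$ Padé approximant of $e^{-s}$. Then $H$ yields a maximally flat delay approximation of order $m+1$: its group delay satisfies $$t_d(\omega)=1+c\,\omega^{2(m+1)}+O(\omega^{2m+4})\quad(\omega\to 0)$$ for some constant $c\neq 0$.
   Context: The $(n,m)$ Padé approximant of $e^{-s}$ is $Q_{nm}(s)/P_{nm}(s)$ with $Q_{nm}(s)=\frac{n!}{(n+m)!}\sum_{k=0}^{m}\binom{m}{k}\frac{(n+k)!}{n!}(-s)^{m-k}$ and $P_{nm}(s)=\frac{m!}{(n+m)!}\sum_{k=0}^{n}\binom{n}{k}\frac{(m+k)!}{m!}s^{n-k}$ (equivalently, the unique rational function with $\deg Q\le m$, $\deg P\le n$, $P(0)=1$, $P(s)e^{-s}-Q(s)=O(s^{n+m+1})$). For a real rational function $H$, its group delay is $t_d(\omega)=-\frac{d}{d\omega}\arg H(j\omega)$, an even function of $\omega$. A delay approximation of unit delay is called maximally flat of order $k$ if, apart from the constant term $1$, the Taylor expansion of $t_d(\omega)$ about $\omega=0$ begins with the term in $\omega^{2k}$. *)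

(* Defs.v *)
From Stdlib Require Import Reals Factorial Binomial.
Open Scope R_scope.

Definition Cx : Type := (R * R)%type.

Definition Cadd (z w : Cx) : Cx := (fst z + fst w, snd z + snd w).
Definition Cmul (z w : Cx) : Cx :=
  (fst z * fst w - snd z * snd w, fst z * snd w + snd z * fst w).
Definition Copp (z : Cx) : Cx := (- fst z, - snd z).
Definition Cscale (r : R) (z : Cx) : Cx := (r * fst z, r * snd z).
Fixpoint Cpow (z : Cx) (k : nat) : Cx :=
  match k with O => (1, 0) | S k' => Cmul z (Cpow z k') end.
Definition Cnorm (z : Cx) : R := sqrt (fst z ^ 2 + snd z ^ 2).
Definition Cdiv (z w : Cx) : Cx :=
  Cscale (/ (fst w ^ 2 + snd w ^ 2)) (Cmul z (fst w, - snd w)).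

Fixpoint Csum (f : nat -> Cx) (N : nat) : Cx :=
  match N with O => f O | S N' => Cadd (Csum f N') (f (S N')) end.

Definition jw (w : R) : Cx := (0, w).

Definition pade_Q (n m : nat) (s : Cx) : Cx :=
  Cscale (INR (fact n) / INR (fact (n + m)))
    (Csum (fun k => Cscale (C m k * INR (fact (n + k)) / INR (fact n))
                           (Cpow (Copp s) (m - k))) m).

Definition pade_P (n m : nat) (s : Cx) : Cx :=
  Cscale (INR (fact m) / INR (fact (n + m)))
    (Csum (fun k => Cscale (C n k * INR (fact (m + k)) / INR (fact m))
                           (Cpow s (n - k))) n).

Definition pade_H (n m : nat) (s : Cx) : Cx := Cdiv (pade_Q n m s) (pade_P n m s).

Definition arg_branch (f : R -> Cx) (theta : R -> R) (delta : R) : Prop :=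
  forall w, - delta < w < delta ->
    0 < Cnorm (f w) /\
    fst (f w) = Cnorm (f w) * cos (theta w) /\
    snd (f w) = Cnorm (f w) * sin (theta w) /\
    exists d, derivable_pt_lim theta w d.

(* Main.v *)
Require Import Defs.
From Stdlib Require Import Reals Factorial Binomial Lra Lia FunctionalExtensionality.
From mathcomp Require Import all_boot all_order all_algebra.
From mathcomp Require Import Rstruct complex zify.
From mathcomp Require ring.
Import Order.TTheory GRing.Theory Num.Theory.
Open Scope R_scope.
Definition qc (n m i : nat) : R :=
  if (i <= m)%N then (-1) ^ i * (INR (fact n) / INR (fact (Nat.add n m)) *
     (C m (Nat.sub m i) * INR (fact (Nat.add n (Nat.sub m i))) / INR (fact n))) else 0.
Definition pc (n m j : nat) : R :=
  if (j <= n)%N then INR (fact m) / INR (fact (Nat.add n m)) *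
     (C n (Nat.sub n j) * INR (fact (Nat.add m (Nat.sub n j))) / INR (fact m)) else 0.

Lemma factP (x : nat) : (0 < x)%nat -> INR (fact x) = INR x * INR (fact (x - 1)).
Proof. intros H. destruct x as [|x]; [lia|]. change (fact (S x)) with (Nat.mul (S x) (fact x)). rewrite mult_INR.
  replace (S x - 1)%nat with x by lia. reflexivity. Qed.

Lemma fneq (x : nat) : INR (fact x) <> 0.
Proof. apply INR_fact_neq_0. Qed.

Lemma qc_closed n m i : (i <= m)%nat -> qc n m i =
  (-1) ^ i * (INR (fact m) * INR (fact (n + m - i)) /
     (INR (fact (n + m)) * INR (fact i) * INR (fact (m - i)))).
Proof. intros H. unfold qc. assert (Hb : (i <= m)%N) by (apply/ssrnat.leP; lia).
  rewrite Hb. unfold C. change Nat.sub with subn. change Nat.add with addn. replace (m - (m - i))%N with i by lia.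
  replace (n + (m - i))%N with (n + m - i)%N by lia.
  pose proof (fneq n). pose proof (fneq m). pose proof (fneq i).
  pose proof (fneq (m-i)). pose proof (fneq (n+m)). field. auto. Qed.

Lemma pc_closed n m j : (j <= n)%nat -> pc n m j =
  INR (fact n) * INR (fact (n + m - j)) /
     (INR (fact (n + m)) * INR (fact j) * INR (fact (n - j))).
Proof. intros H. unfold pc. assert (Hb : (j <= n)%N) by (apply/ssrnat.leP; lia).
  rewrite Hb. unfold C. change Nat.sub with subn. change Nat.add with addn. replace (n - (n - j))%N with j by lia.
  replace (m + (n - j))%N with (n + m - j)%N by lia.
  pose proof (fneq n). pose proof (fneq m). pose proof (fneq j).
  pose proof (fneq (n-j)). pose proof (fneq (n+m)). field. auto. Qed.

Lemma qc_out n m i : (m < i)%nat -> qc n m i = 0.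
Proof. intros H. unfold qc. assert (Hb : (i <= m)%N = false) by (apply/negbTE/negP => /ssrnat.leP; lia).
  now rewrite Hb. Qed.
Lemma pc_out n m i : (n < i)%nat -> pc n m i = 0.
Proof. intros H. unfold pc. assert (Hb : (i <= n)%N = false) by (apply/negbTE/negP => /ssrnat.leP; lia).
  now rewrite Hb. Qed.

Lemma qc_rec n m k :
  INR (k + 1) * (INR k - INR (n + m)) * qc n m (k + 1) + (INR k - INR m) * qc n m k = 0.
Proof.
  destruct (Nat.lt_trichotomy k m) as [H|[H|H]].
  - rewrite (qc_closed n m k ltac:(lia)) (qc_closed n m (k+1) ltac:(lia)).
    rewrite (factP (n + m - k) ltac:(lia)) (factP (m - k) ltac:(lia)) (factP (k + 1) ltac:(lia)).
    replace (n + m - k - 1)%N with (n + m - (k + 1))%N by lia.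
    replace (m - k - 1)%N with (m - (k + 1))%N by lia.
    replace (k + 1 - 1)%N with k by lia.
    rewrite (minus_INR (n+m) k ltac:(lia)) (minus_INR m k ltac:(lia)) plus_INR. simpl INR.
    assert (INR k < INR m) by (apply lt_INR; lia).
    assert (INR m <= INR (n + m)) by (apply le_INR; lia).
    pose proof (fneq k). pose proof (fneq (n+m)). pose proof (fneq (m - (k+1))).
    pose proof (fneq (n + m - (k+1))). pose proof (pos_INR k).
    rewrite pow_add. field. repeat split; lra.
  - subst. rewrite qc_out; [ring|lia].
  - rewrite !qc_out; [ring|lia|lia].
Qed.

Lemma pc_rec n m k :
  INR (k + 1) * (INR k - INR (n + m)) * pc n m (k + 1) + (INR n - INR k) * pc n m k = 0.
Proof.
  destruct (Nat.lt_trichotomy k n) as [H|[H|H]].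
  - rewrite (pc_closed n m k ltac:(lia)) (pc_closed n m (k+1) ltac:(lia)).
    rewrite (factP (n + m - k) ltac:(lia)) (factP (n - k) ltac:(lia)) (factP (k + 1) ltac:(lia)).
    replace (n + m - k - 1)%N with (n + m - (k + 1))%N by lia.
    replace (n - k - 1)%N with (n - (k + 1))%N by lia.
    replace (k + 1 - 1)%N with k by lia.
    rewrite (minus_INR (n+m) k ltac:(lia)) (minus_INR n k ltac:(lia)) plus_INR. simpl INR.
    assert (INR k < INR n) by (apply lt_INR; lia).
    assert (INR n <= INR (n + m)) by (apply le_INR; lia).
    pose proof (fneq k). pose proof (fneq (n+m)). pose proof (fneq (n - (k+1))).
    pose proof (fneq (n + m - (k+1))). pose proof (pos_INR k).
    field. repeat split; lra.
  - subst. rewrite pc_out; [ring|lia].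
  - rewrite !pc_out; [ring|lia|lia].
Qed.

Lemma qc0 n m : qc n m 0 = 1.
Proof. rewrite (qc_closed n m 0 ltac:(lia)) !subn0. simpl. pose proof (fneq m).
  pose proof (fneq (n+m)). field. auto. Qed.
Lemma pc0 n m : pc n m 0 = 1.
Proof. rewrite (pc_closed n m 0 ltac:(lia)) !subn0. simpl. pose proof (fneq n).
  pose proof (fneq (n+m)). field. auto. Qed.
Lemma qc_top n m : qc n m m <> 0.
Proof. rewrite (qc_closed n m m ltac:(lia)). pose proof (fneq m). pose proof (fneq (n+m-m)).
  pose proof (fneq (n+m)). pose proof (fneq (m-m)).
  apply Rmult_integral_contrapositive; split. apply pow_nonzero; lra.
  unfold Rdiv. apply Rmult_integral_contrapositive; split.
  apply Rmult_integral_contrapositive; split; auto.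
  apply Rinv_neq_0_compat. repeat (apply Rmult_integral_contrapositive; split); auto. Qed.
Lemma pc_top n m : pc n m n <> 0.
Proof. rewrite (pc_closed n m n ltac:(lia)). pose proof (fneq n). pose proof (fneq (n+m-n)).
  pose proof (fneq (n+m)). pose proof (fneq (n-n)).
  unfold Rdiv. apply Rmult_integral_contrapositive; split.
  apply Rmult_integral_contrapositive; split; auto.
  apply Rinv_neq_0_compat. repeat (apply Rmult_integral_contrapositive; split); auto. Qed.

Lemma m1E : IZR (Zneg xH) = (- 1)%R :> R.
Proof. by rewrite /IZR /IPR RoppE. Qed.
Ltac toR := rewrite ?(RmultE, RplusE, RminusE, RoppE, RinvE, RdivE, INRE, RpowE, R0E, R1E, m1E).
Module PolyPart.
Import mathcomp.algebra_tactics.ring.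
Local Open Scope ring_scope.

Definition Qp (n m : nat) : {poly R} := \poly_(i < m.+1) qc n m i.
Definition Pp (n m : nat) : {poly R} := \poly_(i < n.+1) pc n m i.

Lemma coefQp n m k : (Qp n m)`_k = qc n m k.
Proof. rewrite coef_poly; case: ltnP => H //. rewrite qc_out //; lia. Qed.
Lemma coefPp n m k : (Pp n m)`_k = pc n m k.
Proof. rewrite coef_poly; case: ltnP => H //. rewrite pc_out //; lia. Qed.

Lemma odeQ n m : 'X * (Qp n m)^`()^`() - ((n + m)%:R)%:P * (Qp n m)^`()
   + 'X * (Qp n m)^`() - (m%:R)%:P * Qp n m = 0.
Proof.
apply/polyP => k. rewrite coef0 !coefD !coefN !coefXM !coefCM !coef_deriv !coefQp.
have := qc_rec n m k. rewrite ?(RplusE, RminusE, RmultE, INRE) => rec.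
case: k rec => [|k] /= rec.
  rewrite -[RHS]rec addn1 /=. ring.
rewrite ?coef_deriv ?coefQp -[RHS]rec !addn1. ring.
Qed.

Lemma odeP n m : 'X * (Pp n m)^`()^`() - ((n + m)%:R)%:P * (Pp n m)^`()
   - 'X * (Pp n m)^`() + (n%:R)%:P * Pp n m = 0.
Proof.
apply/polyP => k. rewrite coef0 !coefD !coefN !coefXM !coefCM !coef_deriv !coefPp.
have := pc_rec n m k. rewrite ?(RplusE, RminusE, RmultE, INRE) => rec.
case: k rec => [|k] /= rec.
  rewrite -[RHS]rec addn1 /=. ring.
rewrite ?coef_deriv ?coefPp -[RHS]rec !addn1. ring.
Qed.

Definition Wp n m := (Qp n m)^`() * Pp n m - Qp n m * (Pp n m)^`() + Qp n m * Pp n m.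

Lemma XW n m : 'X * (Wp n m)^`() = ((n + m)%:R)%:P * Wp n m.
Proof.
apply/eqP; rewrite -subr_eq0; apply/eqP.
rewrite /Wp !derivD !derivN !derivM.
transitivity (('X * (Qp n m)^`()^`() - ((n + m)%:R)%:P * (Qp n m)^`()
   + 'X * (Qp n m)^`() - (m%:R)%:P * Qp n m) * Pp n m -
   Qp n m * ('X * (Pp n m)^`()^`() - ((n + m)%:R)%:P * (Pp n m)^`()
   - 'X * (Pp n m)^`() + (n%:R)%:P * Pp n m)).
  rewrite !natrD !polyCD. ring.
by rewrite odeQ odeP; ring.
Qed.
End PolyPart.
Module PolyPart2.
Import mathcomp.algebra_tactics.ring.
Import PolyPart.
Local Open Scope ring_scope.

Lemma W_coef n m k : k != (n+m)%N -> (Wp n m)`_k = 0.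
Proof.
move=> ne. have e := congr1 (fun p : {poly R} => p`_k) (XW n m). move: e; rewrite /= coefXM coefCM.
have h : forall x : R, k%:R * x = (n+m)%:R * x -> x = 0.
  move=> x hx. have : (k%:R - (n+m)%:R) * x = 0 by rewrite mulrBl hx subrr.
  move/eqP; rewrite mulf_eq0 subr_eq0 eqr_nat (negbTE ne) /= => /eqP //.
case: k ne h => [|k] ne h /= e.
  apply: h. by rewrite mul0r.
apply: h. by rewrite -e coef_deriv mulr_natl.
Qed.

Lemma Wp_eq n m : Wp n m = ((Wp n m)`_(n+m))%:P * 'X^(n+m).
Proof.
apply/polyP => k; rewrite coefCM coefXn. case: eqP => [->|/eqP ne].
  by rewrite mulr1.
by rewrite mulr0 W_coef.
Qed.

Lemma sizeQp n m : size (Qp n m) = m.+1.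
Proof. apply: size_poly_eq. apply/eqP; exact: qc_top. Qed.
Lemma sizePp n m : size (Pp n m) = n.+1.
Proof. apply: size_poly_eq. apply/eqP; exact: pc_top. Qed.

Lemma WN n m : (Wp n m)`_(n+m) = qc n m m * pc n m n.
Proof.
have sQ := sizeQp n m. have sP := sizePp n m.
have Q0 : Qp n m != 0 by rewrite -size_poly_gt0 sQ.
have P0 : Pp n m != 0 by rewrite -size_poly_gt0 sP.
have sQ' : (size (Qp n m)^`() <= m)%N by have := lt_size_deriv Q0; rewrite sQ.
have sP' : (size (Pp n m)^`() <= n)%N by have := lt_size_deriv P0; rewrite sP.
rewrite /Wp !coefD coefN.
rewrite (nth_default 0 (_ : (size ((Qp n m)^`() * Pp n m)%R <= n + m)%N)); last first.
  apply: leq_trans (size_polyMleq _ _) _. rewrite sP. lia.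
rewrite (nth_default 0 (_ : (size (Qp n m * (Pp n m)^`())%R <= n + m)%N)); last first.
  apply: leq_trans (size_polyMleq _ _) _. rewrite sQ. lia.
have -> : (n + m = (size (Qp n m * Pp n m)%R).-1)%N by rewrite size_mul // sQ sP; lia.
rewrite -lead_coefE lead_coefM /Qp /Pp !lead_coef_poly //; try (apply/eqP; first [exact: qc_top | exact: pc_top]).
rewrite subr0 add0r //.
Qed.

Lemma S1eq n m : (Qp n m * Pp n m)`_1 * (n + m)%:R = n%:R - m%:R.
Proof.
rewrite coefM !big_ord_recr big_ord0 /= !coefQp !coefPp qc0 pc0.
have := qc_rec n m 0. have := pc_rec n m 0.
rewrite ?(RplusE, RminusE, RmultE, INRE) /= => rp rq.
move: rp rq; rewrite !add0n subn0 qc0 pc0 => rp rq.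
have e : (0 + 1 * pc n m 1 + qc n m 1 * 1) * (n + m)%:R - (n%:R - m%:R)
   = - (1%:R * (0 - (n + m)%:R) * pc n m 1 + (n%:R - 0) * 1)
     - (1%:R * (0 - (n + m)%:R) * qc n m 1 + (0 - m%:R) * 1) :> R by ring.
by apply/eqP; rewrite -subr_eq0 e rp rq subr0 oppr0.
Qed.
End PolyPart2.
Module CPart.
Import mathcomp.algebra_tactics.ring.
Import PolyPart PolyPart2.
Local Open Scope ring_scope.

Definition toCp (p : {poly R}) : {poly R[i]} := map_poly (real_complex R) p.
Definition Cof (z : Cx) : R[i] := Complex (fst z) (snd z).

Lemma Cof_add z w : Cof (Cadd z w) = Cof z + Cof w.
Proof. by case: z w => [a b] [c d]. Qed.
Lemma Cof_mul z w : Cof (Cmul z w) = Cof z * Cof w.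
Proof. by case: z w => [a b] [c d]. Qed.
Lemma Cof_opp z : Cof (Copp z) = - Cof z.
Proof. by case: z => [a b]. Qed.
Lemma Cof_scale r z : Cof (Cscale r z) = r%:C%C * Cof z.
Proof. case: z => [a b]; rewrite /Cof /Cscale /=. congr Complex; rewrite /=; toR; ring. Qed.
Lemma Cof_pow z k : Cof (Cpow z k) = Cof z ^+ k.
Proof. elim: k => [|k IH] //. by rewrite /= Cof_mul IH exprS. Qed.
Lemma Cof_sum f N : Cof (Csum f N) = \sum_(k < N.+1) Cof (f k).
Proof. elim: N => [|N IH]; first by rewrite big_ord1.
  by rewrite /= Cof_add IH [in RHS]big_ord_recr. Qed.
Lemma Cof_jw w : Cof (jw w) = 'i%C * w%:C%C.
Proof. rewrite /Cof /jw /=. congr Complex; rewrite /=; toR; ring. Qed.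


Lemma padeQ_eval n m z : Cof (pade_Q n m z) = (toCp (Qp n m)).[Cof z].
Proof.
rewrite /pade_Q Cof_scale Cof_sum.
rewrite (horner_coef_wide _ (_ : size (toCp (Qp n m)) <= m.+1)%N); last by rewrite size_map_poly sizeQp.
rewrite big_distrr /= (reindex_inj rev_ord_inj) /=.
apply: eq_bigr => i _.
rewrite Cof_scale Cof_pow Cof_opp coef_map /= coefQp.
have hi : (m.+1 - i.+1 = m - i)%N by lia.
rewrite hi.
have -> : Nat.sub m (m - i) = i by have := ltn_ord i; lia.
rewrite /qc ifT; last by have := ltn_ord i.
change (Nat.sub m i) with (m - i)%N.
toR. rewrite !rmorphM /= rmorphXn rmorphN1 exprNn. ring.
Qed.

Lemma padeP_eval n m z : Cof (pade_P n m z) = (toCp (Pp n m)).[Cof z].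
Proof.
rewrite /pade_P Cof_scale Cof_sum.
rewrite (horner_coef_wide _ (_ : size (toCp (Pp n m)) <= n.+1)%N); last by rewrite size_map_poly sizePp.
rewrite big_distrr /= (reindex_inj rev_ord_inj) /=.
apply: eq_bigr => i _.
rewrite Cof_scale Cof_pow coef_map /= coefPp.
have hi : (n.+1 - i.+1 = n - i)%N by lia.
rewrite hi.
have -> : Nat.sub n (n - i) = i by have := ltn_ord i; lia.
rewrite /pc ifT; last by have := ltn_ord i.
change (Nat.sub n i) with (n - i)%N.
toR. rewrite !rmorphM /=. ring.
Qed.
End CPart.
Module DPart.
Import mathcomp.algebra_tactics.ring.
Import PolyPart PolyPart2 CPart.
Local Open Scope ring_scope.

Definition ReP (p : {poly R[i]}) : {poly R} := \poly_(i < size p) complex.Re p`_i.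
Definition ImP (p : {poly R[i]}) : {poly R} := \poly_(i < size p) complex.Im p`_i.
Definition rot (p : {poly R[i]}) : {poly R[i]} := \poly_(i < size p) (p`_i * 'i%C ^+ i).

Lemma coef_ReP p k : (ReP p)`_k = complex.Re p`_k.
Proof. rewrite coef_poly; case: ltnP => // h; by rewrite nth_default. Qed.
Lemma coef_ImP p k : (ImP p)`_k = complex.Im p`_k.
Proof. rewrite coef_poly; case: ltnP => // h; by rewrite nth_default. Qed.
Lemma coef_rot p k : (rot p)`_k = p`_k * 'i%C ^+ k.
Proof. rewrite coef_poly; case: ltnP => // h; by rewrite nth_default // mul0r. Qed.

Lemma Re_add (x y : R[i]) : complex.Re (x + y) = complex.Re x + complex.Re y.
Proof. by case: x y => [a b] [c d]. Qed.
Lemma Im_add (x y : R[i]) : complex.Im (x + y) = complex.Im x + complex.Im y.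
Proof. by case: x y => [a b] [c d]. Qed.
Lemma Re_mulr (x : R[i]) (r : R) : complex.Re (x * r%:C%C) = complex.Re x * r.
Proof. case: x => [a b] /=; ring. Qed.
Lemma Im_mulr (x : R[i]) (r : R) : complex.Im (x * r%:C%C) = complex.Im x * r.
Proof. case: x => [a b] /=; ring. Qed.
Lemma Re_natmul (x : R[i]) k : complex.Re (x *+ k) = complex.Re x *+ k.
Proof. elim: k => [|k IH]; first by []. by rewrite !mulrS Re_add IH. Qed.
Lemma Im_natmul (x : R[i]) k : complex.Im (x *+ k) = complex.Im x *+ k.
Proof. elim: k => [|k IH]; first by []. by rewrite !mulrS Im_add IH. Qed.

Lemma ReP_eval p (w : R) : complex.Re (p.[w%:C%C]) = (ReP p).[w].
Proof.
rewrite (horner_coef_wide _ (leqnn (size p))) (horner_coef_wide _ (size_poly _ _)).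
rewrite (@big_morph _ _ (@complex.Re R) 0 +%R 0 +%R Re_add) //.
apply: eq_bigr => i _. by rewrite -rmorphXn Re_mulr coef_ReP.
Qed.
Lemma ImP_eval p (w : R) : complex.Im (p.[w%:C%C]) = (ImP p).[w].
Proof.
rewrite (horner_coef_wide _ (leqnn (size p))) (horner_coef_wide _ (size_poly _ _)).
rewrite (@big_morph _ _ (@complex.Im R) 0 +%R 0 +%R Im_add) //.
apply: eq_bigr => i _. by rewrite -rmorphXn Im_mulr coef_ImP.
Qed.

Lemma ReP_deriv p : (ReP p)^`() = ReP (p^`()).
Proof. apply/polyP => k. by rewrite coef_deriv !coef_ReP coef_deriv Re_natmul. Qed.
Lemma ImP_deriv p : (ImP p)^`() = ImP (p^`()).
Proof. apply/polyP => k. by rewrite coef_deriv !coef_ImP coef_deriv Im_natmul. Qed.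

Lemma rot_eval p (w : R) : (rot p).[w%:C%C] = p.['i%C * w%:C%C].
Proof.
rewrite (horner_coef_wide _ (leqnn (size p))) (horner_coef_wide _ (size_poly _ _)).
apply: eq_bigr => i _. by rewrite coef_rot exprMn mulrA.
Qed.

Lemma natmul_aux (x y z : R[i]) n : (x * (y * z)) *+ n = y * ((x *+ n) * z).
Proof. elim: n => [|n IH]; first by rewrite !mulr0n mul0r mulr0.
rewrite !mulrS IH. ring. Qed.

Lemma rot_deriv p : (rot p)^`() = ('i%C)%:P * rot (p^`()).
Proof.
apply/polyP => k. rewrite coef_deriv coefCM !coef_rot coef_deriv exprS.
exact: natmul_aux.
Qed.

Lemma toCp_conj r z : (toCp r).[z^*%C] = ((toCp r).[z])^*%C.
Proof.
rewrite -horner_map /=. congr horner.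
apply/polyP => k. rewrite coef_map /= /toCp !coef_map /=. by rewrite oppr0.
Qed.
End DPart.
Ltac toS := rewrite -?RplusE -?RmultE -?RoppE.

Lemma dpl_eq f g x l l' : (forall y, f y = g y) -> l = l' ->
  derivable_pt_lim f x l -> derivable_pt_lim g x l'.
Proof. intros Hfg Hl H. replace g with f by (apply functional_extensionality; auto).
  now subst. Qed.

Lemma deriv_horner (r : {poly R}) x :
  derivable_pt_lim (fun y => horner r y) x (horner (deriv r) x).
Proof.
elim/poly_ind: r => [|p c IH].
  apply (dpl_eq (fun _ => 0) _ x 0); [intros; by rewrite horner0 | by rewrite deriv0 horner0 |].
  apply derivable_pt_lim_const.
have H := derivable_pt_lim_mult _ _ x _ _ IH (derivable_pt_lim_id x).
have H2 := derivable_pt_lim_plus _ _ x _ _ H (derivable_pt_lim_const c x).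
apply: (dpl_eq _ _ x _ _ _ _ H2).
  move=> y. rewrite hornerMXaddC /plus_fct /mult_fct /id. by toS.
rewrite derivMXaddC hornerD hornerM hornerX. unfold Ranalysis1.id. toS. rewrite Rmult_1_r Rplus_0_r Rplus_comm. reflexivity.
Qed.

Lemma poly_bounded (r : {poly R}) : exists C, 0 <= C /\
  forall w, Rabs w <= 1 -> Rabs (horner r w) <= C.
Proof.
elim/poly_ind: r => [|p c [C [HC IH]]].
  exists 0. split; [lra|]. move=> w _. rewrite horner0 Rabs_R0. lra.
exists (C + Rabs c). split. pose proof (Rabs_pos c). lra.
move=> w Hw. rewrite hornerMXaddC. toS.
eapply Rle_trans; [apply Rabs_triang|]. rewrite Rabs_mult.
have := IH w Hw. have := Rabs_pos w. have := Rabs_pos (horner p w). nra.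
Qed.

Lemma poly_small (r : {poly R}) k : (forall i, (i < k)%N -> nth (GRing.zero) r i = 0) ->
  exists C, 0 <= C /\ forall w, Rabs w <= 1 -> Rabs (horner r w) <= C * Rabs w ^ k.
Proof.
move=> Hr.
have Ht : take_poly k r = 0%R.
  apply/polyP => i. rewrite coef_take_poly coef0. case: ifP => // /Hr //.
have E := poly_take_drop k r. rewrite Ht add0r in E.
have [C [HC HB]] := poly_bounded (drop_poly k r).
exists C. split => // w Hw.
rewrite -E hornerM hornerXn -RpowE -RmultE Rabs_mult. rewrite -(RPow_abs w k).
apply Rmult_le_compat_r. apply pow_le, Rabs_pos. by apply HB.
Qed.
Module FPart.
Import mathcomp.algebra_tactics.ring.
Import PolyPart PolyPart2 CPart DPart.
Local Open Scope ring_scope.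

Lemma cid (a b a' b' : R[i]) :
  complex.Re (a * b^*%C) * complex.Im ('i%C * (a' * b^*%C - a * b'^*%C))
  - complex.Im (a * b^*%C) * complex.Re ('i%C * (a' * b^*%C - a * b'^*%C))
  + complex.Re (a * b^*%C) ^+ 2 + complex.Im (a * b^*%C) ^+ 2
  = complex.Re ((a * b)^*%C * (a' * b - a * b' + a * b)).
Proof. case: a b a' b' => [a1 a2] [b1 b2] [c1 c2] [d1 d2] /=. ring. Qed.

Lemma cnorm (a b : R[i]) :
  complex.Re (a * b^*%C) ^+ 2 + complex.Im (a * b^*%C) ^+ 2
  = complex.Re (a * b) ^+ 2 + complex.Im (a * b) ^+ 2.
Proof. case: a b => [a1 a2] [b1 b2] /=. ring. Qed.

Lemma Re_conj_real (s : R[i]) (r : R) : complex.Re (s^*%C * r%:C%C) = complex.Re s * r.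
Proof. case: s => [a b] /=. ring. Qed.
Lemma Re_conj_ireal (s : R[i]) (r : R) : complex.Re (s^*%C * ('i%C * r%:C%C)) = complex.Im s * r.
Proof. case: s => [a b] /=. ring. Qed.
Lemma Re_scal (s : R[i]) (k : R) : complex.Re (k%:C%C * s) = k * complex.Re s.
Proof. case: s => [a b] /=. ring. Qed.

Lemma iw_even (w : R) M : ('i%C * w%:C%C) ^+ (2 * M) = ((-1) ^+ M * w ^+ (2 * M))%:C%C.
Proof. rewrite exprMn rmorphM rmorphXn rmorphN1 exprM sqr_i. by rewrite -rmorphXn. Qed.
Lemma iw_odd (w : R) M : ('i%C * w%:C%C) ^+ (2 * M).+1 = 'i%C * ((-1) ^+ M * w ^+ (2 * M).+1)%:C%C.
Proof. rewrite exprMn rmorphM rmorphXn rmorphN1 exprS exprM sqr_i -rmorphXn. ring. Qed.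

Lemma conj_iw (w : R) : ('i%C * w%:C%C)^*%C = - ('i%C * w%:C%C).
Proof. rewrite /=. congr Complex; rewrite /=; ring. Qed.
End FPart.
Module GPart.
Import mathcomp.algebra_tactics.ring.
Import PolyPart PolyPart2 CPart DPart FPart.
Local Open Scope ring_scope.

Definition Qc n m := toCp (Qp n m).
Definition Pc n m := toCp (Pp n m).
Definition Tc n m : {poly R[i]} := Qc n m * (Pc n m \Po - 'X).
Definition Gp n m := rot (Tc n m).
Definition Sc n m := Qc n m * Pc n m.
Definition Sg n m := rot (Sc n m).
Definition Kc n m := (Wp n m)`_(n+m).

Lemma Wc_eval n m z : ((Qc n m)^`() * Pc n m - Qc n m * (Pc n m)^`() + Qc n m * Pc n m).[z]
   = (Kc n m)%:C%C * z ^+ (n + m).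
Proof.
have E : toCp (Wp n m) = (Qc n m)^`() * Pc n m - Qc n m * (Pc n m)^`() + Qc n m * Pc n m.
  by rewrite /Wp /toCp rmorphD rmorphB !rmorphM !deriv_map.
rewrite -E Wp_eq /toCp rmorphM /= map_polyC map_polyXn hornerCM hornerXn //.
Qed.

Lemma key n m (w : R) :
  (ReP (Gp n m)).[w] * ((ImP (Gp n m))^`()).[w] - (ImP (Gp n m)).[w] * ((ReP (Gp n m))^`()).[w]
  + (ReP (Gp n m)).[w] ^+ 2 + (ImP (Gp n m)).[w] ^+ 2
  = Kc n m * complex.Re (((Sc n m).['i%C * w%:C%C])^*%C * ('i%C * w%:C%C) ^+ (n + m)).
Proof.
rewrite ReP_deriv ImP_deriv -!ReP_eval -!ImP_eval /Gp rot_deriv hornerCM !rot_eval.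
set z := 'i%C * w%:C%C.
have ET : (Tc n m).[z] = (Qc n m).[z] * ((Pc n m).[z])^*%C.
  by rewrite /Tc hornerM horner_comp hornerN hornerX -conj_iw /Pc toCp_conj.
have ETd : ((Tc n m)^`()).[z] = ((Qc n m)^`()).[z] * ((Pc n m).[z])^*%C
     - (Qc n m).[z] * (((Pc n m)^`()).[z])^*%C.
  rewrite /Tc derivM deriv_comp derivN derivX hornerD !hornerM !horner_comp hornerN hornerX.
  rewrite hornerN -polyC1 hornerC.
  have Hz : - z = z^*%C by rewrite /z conj_iw.
  rewrite Hz /Pc toCp_conj.
  have -> : (toCp (Pp n m))^`() = toCp ((Pp n m)^`()) by rewrite /toCp deriv_map.
  rewrite toCp_conj. ring.
rewrite ET ETd cid.
have -> : Kc n m * complex.Re (((Sc n m).[z])^*%C * z ^+ (n + m))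
   = complex.Re (((Sc n m).[z])^*%C * ((Kc n m)%:C%C * z ^+ (n + m))).
  by rewrite -Re_scal mulrCA.
by rewrite -Wc_eval /Sc !hornerD hornerN !hornerM.
Qed.

Lemma normeq n m (w : R) :
  (ReP (Gp n m)).[w] ^+ 2 + (ImP (Gp n m)).[w] ^+ 2
  = (ReP (Sg n m)).[w] ^+ 2 + (ImP (Sg n m)).[w] ^+ 2.
Proof.
rewrite -!ReP_eval -!ImP_eval /Gp /Sg !rot_eval.
rewrite /Tc /Sc !hornerM horner_comp hornerN hornerX -conj_iw /Pc toCp_conj.
exact: cnorm.
Qed.
End GPart.
Import PolyPart PolyPart2 CPart DPart FPart GPart.

Definition g1f n m (w : R) : R := horner (ReP (Gp n m)) w.
Definition g2f n m (w : R) : R := horner (ImP (Gp n m)) w.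
Definition dg1f n m (w : R) : R := horner (deriv (ReP (Gp n m))) w.
Definition dg2f n m (w : R) : R := horner (deriv (ImP (Gp n m))) w.
Definition s1f n m (w : R) : R := horner (ReP (Sg n m)) w.
Definition s2f n m (w : R) : R := horner (ImP (Sg n m)) w.
Definition S1c n m : R := nth 0 (Qp n m * Pp n m)%R 1.

Lemma deriv_g1 n m w : derivable_pt_lim (g1f n m) w (dg1f n m w).
Proof. exact: deriv_horner. Qed.
Lemma deriv_g2 n m w : derivable_pt_lim (g2f n m) w (dg2f n m w).
Proof. exact: deriv_horner. Qed.

Lemma normeq_S n m w : g1f n m w ^ 2 + g2f n m w ^ 2 = s1f n m w ^ 2 + s2f n m w ^ 2.
Proof. rewrite !RpowE. exact: normeq. Qed.

Module HPart.
Import mathcomp.algebra_tactics.ring.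

Lemma key_even_S n m M w : (n + m = 2 * M)%N ->
  g1f n m w * dg2f n m w - g2f n m w * dg1f n m w + g1f n m w ^ 2 + g2f n m w ^ 2
  = Kc n m * (-1) ^ M * w ^ (2 * M) * s1f n m w.
Proof.
move=> HN. rewrite /g1f /g2f /dg1f /dg2f /s1f. toR.
have := key n m w. rewrite HN iw_even Re_conj_real /Sc -rot_eval ReP_eval => ->.
rewrite -/(Sc n m) -/(Sg n m). ring.
Qed.

Lemma key_odd_S n m M w : (n + m = (2 * M).+1)%N ->
  g1f n m w * dg2f n m w - g2f n m w * dg1f n m w + g1f n m w ^ 2 + g2f n m w ^ 2
  = Kc n m * (-1) ^ M * w ^ (2 * M).+1 * s2f n m w.
Proof.
move=> HN. rewrite /g1f /g2f /dg1f /dg2f /s2f. toR.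
have := key n m w. rewrite HN iw_odd Re_conj_ireal /Sc -rot_eval ImP_eval => ->.
rewrite -/(Sc n m) -/(Sg n m). ring.
Qed.
End HPart.
Module HPart2.
Import mathcomp.algebra_tactics.ring.

Lemma Cof_conjpair v : Cof (fst v, - snd v) = (Cof v)^*%C.
Proof. by case: v. Qed.

Lemma g_eval n m w :
  Cof (Cmul (pade_Q n m (jw w)) (fst (pade_P n m (jw w)), - snd (pade_P n m (jw w))))
  = horner (Gp n m) (w%:C%C).
Proof.
rewrite Cof_mul Cof_conjpair padeQ_eval padeP_eval Cof_jw /Gp rot_eval /Tc hornerM horner_comp.
by rewrite hornerN hornerX -conj_iw /Pc toCp_conj.
Qed.

Lemma g_fst n m w :
  fst (Cmul (pade_Q n m (jw w)) (fst (pade_P n m (jw w)), - snd (pade_P n m (jw w))))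
  = g1f n m w.
Proof. have := congr1 (@complex.Re R) (g_eval n m w). rewrite ReP_eval. done. Qed.
Lemma g_snd n m w :
  snd (Cmul (pade_Q n m (jw w)) (fst (pade_P n m (jw w)), - snd (pade_P n m (jw w))))
  = g2f n m w.
Proof. have := congr1 (@complex.Im R) (g_eval n m w). rewrite ImP_eval. done. Qed.

Lemma Sc_coef n m k : ((Sc n m)`_k = ((Qp n m * Pp n m)`_k)%:C%C)%R.
Proof. by rewrite /Sc /Qc /Pc /toCp -rmorphM coef_map. Qed.

Lemma Sp0 n m : ((Qp n m * Pp n m)`_0 = 1)%R.
Proof. by rewrite coef0M coefQp coefPp qc0 pc0 mulr1. Qed.

Lemma Tc0 n m : ((Tc n m)`_0 = 1)%R.
Proof.
rewrite -horner_coef0 /Tc hornerM horner_comp hornerN hornerX oppr0 !horner_coef0.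
rewrite /Qc /Pc /toCp !coef_map /= !coefQp !coefPp qc0 pc0 /=.
congr Complex; rewrite /=; toR; ring.
Qed.

Lemma bound_g1 n m : exists C, 0 <= C /\ forall w, Rabs w <= 1 ->
  Rabs (g1f n m w - 1) <= C * Rabs w ^ 1.
Proof.
have Hc : forall i, (i < 1)%N -> ((ReP (Gp n m) - 1)%R`_i = 0)%R.
  move=> i hi.
  have -> : i = 0%N by lia.
  rewrite coefD coefN coef_ReP /Gp coef_rot Tc0 -polyC1 coefC /=; toR; ring.
have [C [HC HB]] := poly_small _ 1 Hc.
  exists C. split => // w Hw. have := HB w Hw. by rewrite hornerD hornerN -polyC1 hornerC.
Qed.

Lemma bound_s1 n m : exists C, 0 <= C /\ forall w, Rabs w <= 1 ->
  Rabs (s1f n m w - 1) <= C * Rabs w ^ 2.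
Proof.
have Hc : forall i, (i < 2)%N -> ((ReP (Sg n m) - 1)%R`_i = 0)%R.
  move=> i hi.
  rewrite coefD coefN coef_ReP /Sg coef_rot Sc_coef -polyC1 coefC.
  case: i hi => [|[|i]] hi //.
    rewrite Sp0 /=; toR; ring.
  rewrite /=; toR; ring.
have [C [HC HB]] := poly_small _ 2 Hc.
  exists C. split => // w Hw. have := HB w Hw. by rewrite hornerD hornerN -polyC1 hornerC.
Qed.

Lemma bound_s2 n m : exists C, 0 <= C /\ forall w, Rabs w <= 1 ->
  Rabs (s2f n m w) <= C * Rabs w ^ 1.
Proof.
have Hc : forall i, (i < 1)%N -> ((ImP (Sg n m))`_i = 0)%R.
  move=> i hi.
  have -> : i = 0%N by lia.
  rewrite coef_ImP /Sg coef_rot Sc_coef Sp0 /=; toR; ring.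
have [C [HC HB]] := poly_small _ 1 Hc.
by exists C.
Qed.

Lemma bound_s2b n m : exists C, 0 <= C /\ forall w, Rabs w <= 1 ->
  Rabs (s2f n m w - S1c n m * w) <= C * Rabs w ^ 3.
Proof.
have Hc : forall i, (i < 3)%N -> ((ImP (Sg n m) - (S1c n m)%:P * 'X)`_i = 0)%R.
  move=> i hi.
  rewrite coefD coefN coef_ImP /Sg coef_rot Sc_coef coefCM coefX.
  case: i hi => [|[|[|i]]] hi //.
  - rewrite Sp0 /=; toR; ring.
  - rewrite /= /S1c; toR; ring.
  - rewrite /=; toR; ring.
have [C [HC HB]] := poly_small _ 3 Hc.
exists C. split => // w Hw. have := HB w Hw. by rewrite hornerD hornerN hornerCM hornerX.
Qed.

Lemma Kc_neq0 n m : Kc n m <> 0.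
Proof.
rewrite /Kc WN. have := qc_top n m. have := pc_top n m. move=> h1 h2.
by apply: Rmult_integral_contrapositive.
Qed.

Lemma S1c_eq n m : S1c n m * INR (n + m) = INR n - INR m.
Proof. rewrite /S1c !INRE. toR. exact: S1eq. Qed.
End HPart2.
Import PolyPart PolyPart2 CPart DPart FPart GPart HPart HPart2.

Definition rr n m w : R :=
  / (fst (pade_P n m (jw w)) ^ 2 + snd (pade_P n m (jw w)) ^ 2).

Lemma f1 n m w : fst (pade_H n m (jw w)) = rr n m w * g1f n m w.
Proof. rewrite -(g_fst n m w). unfold rr, pade_H, Cdiv, Cscale. cbn [fst snd]. reflexivity. Qed.
Lemma f2 n m w : snd (pade_H n m (jw w)) = rr n m w * g2f n m w.
Proof. rewrite -(g_snd n m w). unfold rr, pade_H, Cdiv, Cscale. cbn [fst snd]. reflexivity. Qed.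

Lemma rr_cases n m w : rr n m w = 0 \/ 0 < rr n m w.
Proof.
unfold rr. set a := fst _. set b := snd _.
destruct (Req_dec (a ^ 2 + b ^ 2) 0) as [H|H].
- left. rewrite H. apply Rinv_0.
- right. apply Rinv_0_lt_compat. assert (0 <= a ^ 2 + b ^ 2) by nra. lra.
Qed.

Lemma rr_zero_g n m w : rr n m w = 0 -> g1f n m w = 0 /\ g2f n m w = 0.
Proof.
unfold rr. intro H. rewrite -(g_fst n m w) -(g_snd n m w).
set a := fst (pade_P n m (jw w)) in H *. set b := snd (pade_P n m (jw w)) in H *.
destruct (Req_dec (a ^ 2 + b ^ 2) 0) as [H0|H0].
- assert (a = 0) by nra. assert (b = 0) by nra.
  unfold Cmul; cbn [fst snd]. rewrite H1 H2. split; ring.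
- exfalso. apply (Rinv_neq_0_compat _ H0). exact H.
Qed.

Lemma dzero h x l e : 0 < e -> (forall t, Rabs (t - x) < e -> h t = 0) ->
  derivable_pt_lim h x l -> l = 0.
Proof.
intros He Hz Hd. destruct (Req_dec l 0) as [|Hl]; auto. exfalso.
assert (Hl' : 0 < Rabs l / 2) by (pose proof (Rabs_pos_lt l Hl); lra).
destruct (Hd _ Hl') as [del Hdel].
set t := Rmin del e / 2.
assert (Ht : 0 < t) by (unfold t; pose proof (cond_pos del); unfold Rmin; destruct Rle_dec; lra).
assert (Ht1 : t < del) by (pose proof (Rmin_l del e); unfold t in *; lra).
assert (Ht2 : t < e) by (pose proof (Rmin_r del e); unfold t in *; lra).
assert (H1 : t <> 0) by lra.
assert (H2 : Rabs t < del) by (rewrite Rabs_right; lra).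
specialize (Hdel t H1 H2).
rewrite (Hz (x + t)) in Hdel; [| replace (x + t - x) with t by ring; rewrite Rabs_right; lra].
rewrite (Hz x) in Hdel; [| replace (x - x) with 0 by ring; rewrite Rabs_R0; lra].
replace ((0 - 0) / t - l) with (- l) in Hdel by (field; lra).
rewrite Rabs_Ropp in Hdel. lra.
Qed.

Lemma branch_facts n m theta delta t :
  arg_branch (fun w => pade_H n m (jw w)) theta delta -> - delta < t < delta ->
  exists rho, 0 < rho /\ g1f n m t = rho * cos (theta t) /\ g2f n m t = rho * sin (theta t).
Proof.
intros Hb Ht. destruct (Hb t Ht) as [Hn [Hc [Hs _]]].
rewrite f1 in Hc. rewrite f2 in Hs.
destruct (rr_cases n m t) as [H0|H0].
- exfalso. unfold Cnorm in Hn. rewrite f1 f2 H0 in Hn.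
  replace ((0 * g1f n m t) ^ 2 + (0 * g2f n m t) ^ 2) with 0 in Hn by ring.
  rewrite sqrt_0 in Hn. lra.
- exists (Cnorm (pade_H n m (jw t)) / rr n m t). split.
  + apply Rdiv_lt_0_compat; assumption.
  + split.
    * apply (Rmult_eq_reg_l (rr n m t)); [|lra]. rewrite Hc. field. lra.
    * apply (Rmult_eq_reg_l (rr n m t)); [|lra]. rewrite Hs. field. lra.
Qed.

Lemma deriv_branch n m theta delta w d :
  arg_branch (fun w => pade_H n m (jw w)) theta delta -> Rabs w < delta ->
  derivable_pt_lim theta w d ->
  d * (g1f n m w ^ 2 + g2f n m w ^ 2) =
  g1f n m w * dg2f n m w - g2f n m w * dg1f n m w.
Proof.
intros Hb Hw Hd.
set h := fun t => g1f n m t * sin (theta t) - g2f n m t * cos (theta t).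
assert (Hh : forall t, Rabs (t - w) < delta - Rabs w -> h t = 0).
{ intros t Ht. assert (Ht' : - delta < t < delta).
  { assert (Hta : Rabs t < delta).
    { pose proof (Rabs_triang (t - w) w) as Htr. replace (t - w + w) with t in Htr by ring. lra. }
    apply Rabs_def2 in Hta. lra. }
  destruct (branch_facts n m theta delta t Hb Ht') as [rho [Hr [H1 H2]]].
  unfold h. rewrite H1 H2. ring. }
assert (Hdh : derivable_pt_lim h w
   ((dg1f n m w * sin (theta w) + g1f n m w * (cos (theta w) * d))
   - (dg2f n m w * cos (theta w) + g2f n m w * (- sin (theta w) * d)))).
{ apply (derivable_pt_lim_minus (fun t => g1f n m t * sin (theta t))
         (fun t => g2f n m t * cos (theta t))).
  - apply (derivable_pt_lim_mult (g1f n m) (fun t => sin (theta t))).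
    apply deriv_g1. apply (derivable_pt_lim_comp theta sin). exact Hd. apply derivable_pt_lim_sin.
  - apply (derivable_pt_lim_mult (g2f n m) (fun t => cos (theta t))).
    apply deriv_g2. apply (derivable_pt_lim_comp theta cos). exact Hd. apply derivable_pt_lim_cos. }
assert (He : 0 < delta - Rabs w) by lra.
pose proof (dzero h w _ _ He Hh Hdh) as H0.
assert (Hw' : - delta < w < delta) by (apply Rabs_def2 in Hw; lra).
destruct (branch_facts n m theta delta w Hb Hw') as [rho [Hr [H1 H2]]].
rewrite H1 H2 in H0 |- *.
pose proof (sin2_cos2 (theta w)) as Hsc. unfold Rsqr in Hsc.
set c := cos (theta w) in H0 Hsc |- *. set s := sin (theta w) in H0 Hsc |- *.
set a := dg1f n m w in H0 |- *. set b := dg2f n m w in H0 |- *.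
apply Rminus_diag_uniq.
transitivity (rho * (a * s + rho * c * (c * d) - (b * c + rho * s * (- s * d)))).
- ring.
- rewrite H0. ring.
Qed.
Lemma abs_le_inv x a : Rabs x <= a -> - a <= x <= a.
Proof. intro H. pose proof (Rle_abs x). pose proof (Rle_abs (- x)). rewrite Rabs_Ropp in H1. lra. Qed.

Lemma abs_prod3 a b c : Rabs (a * b * c) = Rabs a * Rabs b * Rabs c.
Proof. rewrite !Rabs_mult. ring. Qed.

Lemma s1_facts s1 w C1 : 0 <= C1 -> Rabs w <= 1 -> C1 * Rabs w <= 1/2 ->
  Rabs (s1 - 1) <= C1 * Rabs w ^ 2 -> Rabs (s1 - 1) <= 1/2 /\ 1/2 <= s1.
Proof.
intros HC Hw Hc Hs. pose proof (Rabs_pos w).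
assert (0 <= C1 * Rabs w) by (apply Rmult_le_pos; lra).
assert (C1 * Rabs w ^ 2 <= C1 * Rabs w) by (replace (C1 * Rabs w ^ 2) with ((C1 * Rabs w) * Rabs w) by ring; nra).
assert (Rabs (s1 - 1) <= 1/2) by lra. split; auto.
apply abs_le_inv in H2. lra.
Qed.

Lemma D_minus1 s1 s2 w C1 C2 : 0 <= C1 -> 0 <= C2 -> Rabs w <= 1 -> C1 * Rabs w <= 1/2 ->
  Rabs (s1 - 1) <= C1 * Rabs w ^ 2 -> Rabs s2 <= C2 * Rabs w ^ 1 ->
  Rabs (s1 ^ 2 + s2 ^ 2 - 1) <= (3 * C1 + C2 ^ 2) * Rabs w ^ 2.
Proof.
intros HC1 HC2 Hw Hc Hs1 Hs2.
destruct (s1_facts s1 w C1 HC1 Hw Hc Hs1) as [Ha Hb].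
replace (s1 ^ 2 + s2 ^ 2 - 1) with ((s1 - 1) * (s1 + 1) + s2 * s2) by ring.
eapply Rle_trans; [apply Rabs_triang|]. rewrite !Rabs_mult.
assert (Rabs (s1 + 1) <= 3) by (apply abs_le_inv in Ha; apply Rabs_le; lra).
pose proof (Rabs_pos (s1 - 1)). pose proof (Rabs_pos s2). pose proof (Rabs_pos w).
assert (Rabs (s1 - 1) * Rabs (s1 + 1) <= 3 * C1 * Rabs w ^ 2).
{ pose proof (Rabs_pos (s1 + 1)). assert (0 <= C1 * Rabs w ^ 2) by (apply Rmult_le_pos; [lra| apply pow_le; lra]). nra. }
assert (Rabs s2 * Rabs s2 <= C2 ^ 2 * Rabs w ^ 2).
{ simpl in Hs2 |- *. rewrite Rmult_1_r in Hs2. nra. }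
lra.
Qed.

Lemma quarter_bound E D B : 1/4 <= D -> Rabs (E * D) <= B -> Rabs E <= 4 * B.
Proof.
intros HD H. have HD' : Rabs D = D by apply Rabs_pos_eq; lra. rewrite Rabs_mult HD' in H.
pose proof (Rabs_pos E). nra.
Qed.

Lemma alg_odd d s1 s2 Kp S w x C1 C2 C3 :
  0 <= C1 -> 0 <= C2 -> 0 <= C3 -> Rabs w <= 1 -> C1 * Rabs w <= 1/2 ->
  Rabs (s1 - 1) <= C1 * Rabs w ^ 2 -> Rabs s2 <= C2 * Rabs w ^ 1 ->
  Rabs (s2 - S * w) <= C3 * Rabs w ^ 3 ->
  (d + 1) * (s1 ^ 2 + s2 ^ 2) = Kp * x * s2 ->
  Rabs (- d - 1 - (- (Kp * S)) * (x * w)) <=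
    4 * Rabs Kp * (C3 + Rabs S * (3 * C1 + C2 ^ 2)) * (Rabs x * Rabs w ^ 3).
Proof.
intros HC1 HC2 HC3 Hw Hc Hs1 Hs2 Hs2b Hrel.
set D := s1 ^ 2 + s2 ^ 2 in Hrel.
destruct (s1_facts s1 w C1 HC1 Hw Hc Hs1) as [Ha Hb].
assert (HD : 1/4 <= D) by (unfold D; nra).
assert (HE : (- d - 1 - (- (Kp * S)) * (x * w)) * D = - (Kp * x) * ((s2 - S * w) - S * w * (D - 1))).
{ transitivity (- (Kp * x) * ((s2 - S * w) - S * w * (D - 1)) + (Kp * x * s2 - (d + 1) * D)).
  - ring.
  - rewrite Hrel. ring. }
replace (4 * Rabs Kp * (C3 + Rabs S * (3 * C1 + C2 ^ 2)) * (Rabs x * Rabs w ^ 3))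
  with (4 * (Rabs Kp * Rabs x * ((C3 + Rabs S * (3 * C1 + C2 ^ 2)) * Rabs w ^ 3))) by ring.
apply (quarter_bound _ D); auto.
rewrite HE Rabs_mult Rabs_Ropp Rabs_mult.
pose proof (D_minus1 s1 s2 w C1 C2 HC1 HC2 Hw Hc Hs1 Hs2) as HD1. fold D in HD1.
assert (HB : Rabs ((s2 - S * w) - S * w * (D - 1)) <= (C3 + Rabs S * (3 * C1 + C2 ^ 2)) * Rabs w ^ 3).
{ unfold Rminus at 1. eapply Rle_trans; [apply Rabs_triang|]. rewrite Rabs_Ropp !Rabs_mult.
  pose proof (Rabs_pos S). pose proof (Rabs_pos w). pose proof (Rabs_pos (D - 1)).
  assert (Rabs S * Rabs w * Rabs (D - 1) <= Rabs S * Rabs w * ((3 * C1 + C2 ^ 2) * Rabs w ^ 2)).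
  { apply Rmult_le_compat_l; [apply Rmult_le_pos|]; lra. }
  assert (Rabs S * Rabs w * ((3 * C1 + C2 ^ 2) * Rabs w ^ 2) = Rabs S * (3 * C1 + C2 ^ 2) * Rabs w ^ 3) by ring.
  lra. }
apply Rmult_le_compat_l; [apply Rmult_le_pos; apply Rabs_pos|]. exact HB.
Qed.

Lemma alg_even d s1 s2 Kp w x C1 C2 :
  0 <= C1 -> 0 <= C2 -> Rabs w <= 1 -> C1 * Rabs w <= 1/2 ->
  Rabs (s1 - 1) <= C1 * Rabs w ^ 2 -> Rabs s2 <= C2 * Rabs w ^ 1 ->
  (d + 1) * (s1 ^ 2 + s2 ^ 2) = Kp * x * s1 ->
  Rabs (- d - 1 - (- Kp) * x) <=
    4 * Rabs Kp * (2 * C1 + (3 * C1 + C2 ^ 2)) * (Rabs x * Rabs w ^ 2).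
Proof.
intros HC1 HC2 Hw Hc Hs1 Hs2 Hrel.
set D := s1 ^ 2 + s2 ^ 2 in Hrel.
destruct (s1_facts s1 w C1 HC1 Hw Hc Hs1) as [Ha Hb].
assert (HD : 1/4 <= D) by (unfold D; nra).
assert (HE : (- d - 1 - (- Kp) * x) * D = (Kp * x) * ((D - 1) - (s1 - 1))).
{ transitivity ((Kp * x) * ((D - 1) - (s1 - 1)) + (Kp * x * s1 - (d + 1) * D)).
  - ring.
  - rewrite Hrel. ring. }
replace (4 * Rabs Kp * (2 * C1 + (3 * C1 + C2 ^ 2)) * (Rabs x * Rabs w ^ 2))
  with (4 * (Rabs Kp * Rabs x * ((2 * C1 + (3 * C1 + C2 ^ 2)) * Rabs w ^ 2))) by ring.
apply (quarter_bound _ D); auto.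
rewrite HE !Rabs_mult.
pose proof (D_minus1 s1 s2 w C1 C2 HC1 HC2 Hw Hc Hs1 Hs2) as HD1. fold D in HD1.
assert (HB : Rabs ((D - 1) - (s1 - 1)) <= (2 * C1 + (3 * C1 + C2 ^ 2)) * Rabs w ^ 2).
{ unfold Rminus at 1. eapply Rle_trans; [apply Rabs_triang|]. rewrite Rabs_Ropp.
  pose proof (pow_le (Rabs w) 2 (Rabs_pos w)). nra. }
apply Rmult_le_compat_l; [apply Rmult_le_pos; apply Rabs_pos|]. exact HB.
Qed.
Import PolyPart PolyPart2 CPart DPart FPart GPart HPart HPart2.

Lemma sqrt_id a b : 0 < a -> sqrt (a ^ 2 + b ^ 2) = a * sqrt (1 + (b / a)²).
Proof.
intro Ha. rewrite <- (sqrt_pow2 a) at 2; [|lra].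
rewrite <- sqrt_mult; [| apply pow2_ge_0 | pose proof (Rle_0_sqr (b / a)); lra].
f_equal. unfold Rsqr. field. lra.
Qed.

Lemma exists_branch n m : exists (delta : R) (theta : R -> R),
  0 < delta /\ arg_branch (fun w => pade_H n m (jw w)) theta delta.
Proof.
destruct (bound_g1 n m) as [C0 [HC0 HB0]].
set delta := / (2 * C0 + 2).
assert (Hdel : delta * (2 * C0 + 2) = 1) by (unfold delta; field; lra).
assert (Hdp : 0 < delta) by (unfold delta; apply Rinv_0_lt_compat; lra).
exists delta, (fun w => atan (g2f n m w / g1f n m w)).
split; [exact Hdp|].
intros w Hw.
assert (Hw1 : Rabs w < delta) by (apply Rabs_def1; lra).
assert (Hw2 : Rabs w <= 1) by nra.
have Hg := HB0 w Hw2. rewrite pow_1 in Hg.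
assert (Hg1 : 1/2 < g1f n m w).
{ pose proof (abs_le_inv _ _ Hg). pose proof (Rabs_pos w).
  assert (C0 * Rabs w <= C0 * delta) by (apply Rmult_le_compat_l; lra).
  assert (C0 * delta < 1/2) by nra. lra. }
assert (Hrr : 0 < rr n m w).
{ destruct (rr_cases n m w) as [H|H]; auto. destruct (rr_zero_g n m w H). lra. }
assert (Ha : 0 < rr n m w * g1f n m w) by nra.
unfold Cnorm. rewrite f1 f2.
rewrite (sqrt_id _ _ Ha).
replace (rr n m w * g2f n m w / (rr n m w * g1f n m w)) with (g2f n m w / g1f n m w) by (field; lra).
set t := g2f n m w / g1f n m w.
assert (Hs : 0 < sqrt (1 + t²)) by (apply sqrt_lt_R0; pose proof (Rle_0_sqr t); lra).
split; [apply Rmult_lt_0_compat; lra|].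
split; [rewrite cos_atan; field; lra|].
assert (Ht : rr n m w * g2f n m w = rr n m w * g1f n m w * t) by (unfold t; field; lra).
split; [rewrite sin_atan Ht; field; lra|].
eexists.
apply (derivable_pt_lim_comp (fun y => g2f n m y / g1f n m y) atan).
- apply (derivable_pt_lim_div (g2f n m) (g1f n m)); [apply deriv_g2 | apply deriv_g1 | lra].
- apply derivable_pt_lim_atan.
Qed.

Lemma small_w C1 w : 0 <= C1 -> Rabs w < / (2 * C1 + 2) -> Rabs w <= 1 /\ C1 * Rabs w <= 1/2.
Proof.
intros HC Hw. assert (Hd : / (2 * C1 + 2) * (2 * C1 + 2) = 1) by (field; lra).
pose proof (Rabs_pos w). assert (Rabs w * (2 * C1 + 2) < 1).
{ rewrite -Hd. apply Rmult_lt_compat_r; lra. }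
assert (0 <= C1 * Rabs w) by (apply Rmult_le_pos; lra).
split; lra.
Qed.

Theorem theorem4 (n m : nat) (Hnm : n = (m + 1)%nat \/ n = (m + 2)%nat) :
  (exists (delta : R) (theta : R -> R),
      0 < delta /\ arg_branch (fun w => pade_H n m (jw w)) theta delta) /\
  (exists c : R, c <> 0 /\
    forall (delta : R) (theta : R -> R),
      0 < delta -> arg_branch (fun w => pade_H n m (jw w)) theta delta ->
      exists K delta1 : R, 0 < delta1 /\
        forall w d : R, Rabs w < delta1 -> Rabs w < delta ->
          derivable_pt_lim theta w d ->
          Rabs ((- d) - 1 - c * w ^ (2 * (m + 1))) <= K * Rabs w ^ (2 * m + 4)).
Proof.
split; [apply exists_branch|].
have HK := Kc_neq0 n m.
have Hm1 : forall k, (-1) ^ k <> 0 by (intro k; apply pow_nonzero; lra).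
destruct (bound_s1 n m) as [C1 [HC1 HB1]].
destruct (bound_s2 n m) as [C2 [HC2 HB2]].
destruct (bound_s2b n m) as [C3 [HC3 HB3]].
assert (Hd1 : 0 < / (2 * C1 + 2)) by (apply Rinv_0_lt_compat; lra).
destruct Hnm as [Hn|Hn].
-
  have HS : S1c n m <> 0.
  { have E := S1c_eq n m.
    assert (HIn : INR n = INR m + 1) by (replace n with (S m) by lia; apply S_INR).
    intros HS0. rewrite HS0 in E. lra. }
  exists (- (Kc n m * (-1) ^ m * S1c n m)). split.
  { intro H0. assert (Kc n m * (-1) ^ m * S1c n m = 0) by lra.
    apply Rmult_integral in H. destruct H as [H|H]; [|contradiction].
    apply Rmult_integral in H. destruct H as [H|H]; [contradiction|]. exact (Hm1 m H). }
  intros delta theta Hdel Hb.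
  exists (4 * Rabs (Kc n m * (-1) ^ m) * (C3 + Rabs (S1c n m) * (3 * C1 + C2 ^ 2))), (/ (2 * C1 + 2)).
  split; [exact Hd1|].
  intros w d Hw1 Hw Hd.
  destruct (small_w C1 w HC1 Hw1) as [Hw2 Hcw].
  have Hrel := deriv_branch n m theta delta w d Hb Hw Hd.
  have Hkey := key_odd_S n m m w ltac:(lia).
  have Hnorm := normeq_S n m w.
  have Hrel2 : (d + 1) * (s1f n m w ^ 2 + s2f n m w ^ 2) =
     (Kc n m * (-1) ^ m) * w ^ (2 * m).+1 * s2f n m w.
  { rewrite -Hnorm. transitivity (d * (g1f n m w ^ 2 + g2f n m w ^ 2) + (g1f n m w ^ 2 + g2f n m w ^ 2)); [ring|].
    rewrite Hrel. rewrite -Hkey. ring. }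
  have H := alg_odd d (s1f n m w) (s2f n m w) (Kc n m * (-1) ^ m) (S1c n m) w (w ^ (2 * m).+1)
    C1 C2 C3 HC1 HC2 HC3 Hw2 Hcw (HB1 w Hw2) (HB2 w Hw2) (HB3 w Hw2) Hrel2.
  replace (2 * (m + 1))%N with ((2 * m).+1 + 1)%N by lia.
  replace (2 * m + 4)%N with ((2 * m).+1 + 3)%N by lia.
  rewrite pow_add pow_1 pow_add. rewrite (RPow_abs w (2 * m).+1). exact H.
-
  exists (- (Kc n m * (-1) ^ (m + 1))). split.
  { intro H0. assert (Kc n m * (-1) ^ (m + 1) = 0) by lra.
    apply Rmult_integral in H. destruct H as [H|H]; [contradiction|]. exact (Hm1 _ H). }
  intros delta theta Hdel Hb.
  exists (4 * Rabs (Kc n m * (-1) ^ (m + 1)) * (2 * C1 + (3 * C1 + C2 ^ 2))), (/ (2 * C1 + 2)).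
  split; [exact Hd1|].
  intros w d Hw1 Hw Hd.
  destruct (small_w C1 w HC1 Hw1) as [Hw2 Hcw].
  have Hrel := deriv_branch n m theta delta w d Hb Hw Hd.
  have Hkey := key_even_S n m (m + 1) w ltac:(lia).
  have Hnorm := normeq_S n m w.
  have Hrel2 : (d + 1) * (s1f n m w ^ 2 + s2f n m w ^ 2) =
     (Kc n m * (-1) ^ (m + 1)) * w ^ (2 * (m + 1)) * s1f n m w.
  { rewrite -Hnorm. transitivity (d * (g1f n m w ^ 2 + g2f n m w ^ 2) + (g1f n m w ^ 2 + g2f n m w ^ 2)); [ring|].
    rewrite Hrel. rewrite -Hkey. ring. }
  have H := alg_even d (s1f n m w) (s2f n m w) (Kc n m * (-1) ^ (m + 1)) w (w ^ (2 * (m + 1)))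
    C1 C2 HC1 HC2 Hw2 Hcw (HB1 w Hw2) (HB2 w Hw2) Hrel2.
  replace (2 * m + 4)%N with (2 * (m + 1) + 2)%N by lia.
  rewrite (pow_add (Rabs w)) (RPow_abs w (2 * (m + 1))). exact H.
Qed.
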